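(* Let $N\ge1$, $d\ge1$, $H\in(0,1)^N$ and let $v$ be an $(N,d)$-fractional Brownian sheet with Hurst parameter $H$. If $x^1,\dots,x^m\in(0,\infty)^N$ are distinct points, then the real random variables $v_1(x^1),\dots,v_1(x^m)$ are linearly independent.
   Context: An $(N,d)$-fractional Brownian sheet with Hurst parameter $H\in(0,1)^N$ is an $\mathbb{R}^d$-valued continuous centered Gaussian field $\{v(x),x\in\mathbb{R}^N_+\}$ with $\mathrm E(v_j(x)v_\ell(y))=\delta_{j,\ell}\prod_{i=1}^N\frac12(|x_i|^{2H_i}+|y_i|^{2H_i}-|x_i-y_i|^{2H_i})$; $v_1$ denotes its first component. *)

(* Defs.v *)
From HB Require Import structures.
From mathcomp Require Import all_boot all_order all_algebra.
From mathcomp Require Import all_classical all_reals all_analysis.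
Set Implicit Arguments. Unset Strict Implicit. Unset Printing Implicit Defensive.
Import Order.TTheory GRing.Theory Num.Theory.
Import numFieldNormedType.Exports.
Local Open Scope classical_set_scope.
Local Open Scope ring_scope.

Definition orthant (R : realType) (N : nat) : set 'rV[R]_N :=
  [set x | forall i : 'I_N, 0 <= x ord0 i].

Definition gaussian_rv (dm : measure_display) (T : measurableType dm)
    (R : realType) (P : probability T R) (Y : T -> R) (m s : R) : Prop :=
  [/\ 0 <= s, measurable_fun setT Y &
   forall A : set R, measurable A ->
     P (Y @^-1` A) = (if s == 0 then \d_m A else normal_prob m s A)].

Definition fbs_cov (R : realType) (N : nat) (H : 'I_N -> R) (x y : 'rV[R]_N) : R :=
  \prod_(i < N) (2^-1 * (`|x ord0 i| `^ (2 * H i) + `|y ord0 i| `^ (2 * H i)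
                          - `|x ord0 i - y ord0 i| `^ (2 * H i))).

(* v is an (N,d)-fractional Brownian sheet with Hurst parameter H on the
   probability space (T, P): a continuous centered Gaussian field indexed by
   R^N_+ with values in R^d (v x j w = j-th component of v(x) at outcome w)
   and covariance E(v_j(x) v_l(y)) = delta_{jl} prod_i (...). *)
Definition is_fbs (dm : measure_display) (T : measurableType dm)
    (R : realType) (P : probability T R) (N dd : nat) (H : 'I_N -> R)
    (v : 'rV[R]_N -> 'I_dd -> T -> R) : Prop :=
  [/\
      forall (w : T) (j : 'I_dd), {within @orthant R N, continuous (fun x => v x j w)},
      (* centered, jointly Gaussian: every finite linear combination of the
         field's coordinates is a centered Gaussian random variable *)
      forall (n : nat) (xs : 'I_n -> 'rV[R]_N) (js : 'I_n -> 'I_dd) (c : 'I_n -> R),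
        (forall k, @orthant R N (xs k)) ->
        exists s : R, gaussian_rv P (fun w => \sum_(k < n) c k * v (xs k) (js k) w) 0 s
    &
      forall (x y : 'rV[R]_N) (j l : 'I_dd), @orthant R N x -> @orthant R N y ->
        ('E_P[fun w => (v x j w * v y l w)%R] =
           ((if j == l then 1 else 0) * fbs_cov H x y)%:E)%E].

(* Main.v *)
Require Import Defs.
From HB Require Import structures.
From mathcomp Require Import all_boot all_order all_algebra.
From mathcomp Require Import all_classical all_reals all_analysis.
From mathcomp Require Import ring lra measurable_realfun.
Import Order.TTheory GRing.Theory Num.Theory.
Import numFieldNormedType.Exports.
Local Open Scope classical_set_scope.
Local Open Scope ring_scope.

Section An.
Variable R : realType.

Lemma powR_inv_le (a b p : R) : 0 < a -> a <= b -> p <= 0 -> b `^ p <= a `^ p.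
Proof.
move=> a0 ab p0.
have b0 : 0 < b by apply: lt_le_trans ab.
have q0 : 0 <= - p by rewrite oppr_ge0.
have -> : p = - (- p) by rewrite opprK.
move: (-p) q0 => q q0.
rewrite !powRN.
rewrite lef_pV2 ?posrE ?powR_gt0//.
by apply: (ge0_ler_powR q0) => //; rewrite nnegrE ltW.
Qed.

Lemma mvt_pow (a b p : R) : 0 < a -> a <= b ->
  exists2 c, c \in `[a, b] & b `^ p - a `^ p = p * c `^ (p - 1) * (b - a).
Proof.
move=> a0 ab.
have [||c cab E] := MVT_segment (f := fun y : R => y `^ p) (df := fun y : R => p * y `^ (p - 1)) ab.
- move=> x; rewrite in_itv/= => /andP[ax _].
  apply: is_derive1_powR; exact: lt_trans ax.
- apply: derivable_within_continuous => x; rewrite in_itv/= => /andP[ax _].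
apply: derivable_powR; rewrite in_itv/= andbT; exact: lt_le_trans ax.
- by exists c.
Qed.

Lemma D2_bound (al t h : R) : 0 < t -> 0 < h -> 2 * h <= t -> al <= 2 ->
  `|(t + h) `^ al + (t - h) `^ al - 2 * t `^ al|
    <= 2 * `|al * (al - 1)| * (t / 2) `^ (al - 2) * h ^+ 2.
Proof.
move=> t0 h0 ht al2.
have th0 : 0 < t - h by lra.
have [x1 x1i E1] := mvt_pow t (t + h) al t0 ltac:(lra).
have [x2 x2i E2] := mvt_pow (t - h) t al th0 ltac:(lra).
move: x1i x2i; rewrite !in_itv/= => /andP[tx1 x1t] /andP[x2t tx2].
have x2pos : 0 < x2 by apply: lt_le_trans x2t.
have x21 : x2 <= x1 by apply: le_trans tx1.
have [y yi E3] := mvt_pow _ _ (al - 1) x2pos x21.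
move: yi; rewrite in_itv/= => /andP[x2y yx1].
have ypos : t / 2 <= y.
  apply: le_trans x2y; apply: le_trans x2t.
  rewrite ler_pdivrMr// mulrBl; lra.
have -> : (t + h) `^ al + (t - h) `^ al - 2 * t `^ al
   = ((t + h) `^ al - t `^ al) - (t `^ al - (t - h) `^ al) by ring.
rewrite E1 E2.
have -> : al * x1 `^ (al - 1) * (t + h - t) - al * x2 `^ (al - 1) * (t - (t - h))
  = al * h * (x1 `^ (al - 1) - x2 `^ (al - 1)) by ring.
rewrite E3.
have -> : al * h * ((al - 1) * y `^ (al - 1 - 1) * (x1 - x2))
   = (al * (al - 1)) * (y `^ (al - 2)) * (h * (x1 - x2)).
  by rewrite -addrA -opprD -[1 + 1]/(2%:R); ring.
rewrite normrM (normrM (al * (al - 1)) (y `^ _)).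
have hx : `|h * (x1 - x2)| <= 2 * h ^+ 2.
  rewrite ger0_norm; last by apply: mulr_ge0; lra.
  have d : x1 - x2 <= 2 * h by lra.
  rewrite expr2 mulrA (mulrC 2 h) -mulrA; apply: ler_wpM2l => //; lra.
have yp : `|y `^ (al - 2)| <= (t / 2) `^ (al - 2).
  rewrite ger0_norm ?powR_ge0//; apply: powR_inv_le => //; first by rewrite divr_gt0.
  by rewrite subr_le0.
have -> : 2 * `|al * (al - 1)| * (t / 2) `^ (al - 2) * h ^+ 2
  = `|al * (al - 1)| * (t / 2) `^ (al - 2) * (2 * h ^+ 2) by ring.
by rewrite ler_pM // ?mulr_ge0// ler_pM.
Qed.

Lemma D2_cvg_pos (al t : R) : 0 < t -> 0 < al < 2 ->
  (fun h => (`|t + h| `^ al + `|t - h| `^ al - 2 * `|t| `^ al) / h `^ al) @ 0^'+ --> 0.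
Proof.
move=> t0 /andP[al0 al2].
set C := 2 * `|al * (al - 1)| * (t / 2) `^ (al - 2).
have g0 : (fun h => C * h `^ (2 - al)) @ 0^'+ --> 0.
  suff : (fun h => C * h `^ (2 - al)) @ 0^'+ --> C * 0 by rewrite mulr0.
  apply: cvgMl_tmp; apply: powR_cvg0; lra.
apply: (@squeeze_cvgr _ _ _ _ (fun h => - (C * h `^ (2 - al))) (fun h => C * h `^ (2 - al))); last first.
- exact: g0.
- suff : (fun h => - (C * h `^ (2 - al))) @ 0^'+ --> - 0 by rewrite oppr0.
  exact: cvgN.
near=> h.
have h0 : 0 < h by near: h; exact: nbhs_right_gt.
have h2 : 2 * h <= t.
  near: h; exists (t / 2) => /=; first by rewrite divr_gt0.
  move=> y /= + y0; rewrite distrC subr0 gtr0_norm // => yt; lra.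
rewrite -ler_norml.
rewrite (gtr0_norm t0) (gtr0_norm (_ : 0 < t + h)); last by lra.
rewrite (gtr0_norm (_ : 0 < t - h)); last by lra.
rewrite normrM normfV (ger0_norm (powR_ge0 _ _)) ler_pdivrMr ?powR_gt0//.
apply: le_trans; first exact: (D2_bound al t h t0 h0 h2 (ltW al2)).
rewrite -(mulrA C) -powRD; last by rewrite (gt_eqF h0) implybT.
rewrite subrK powR_mulrn; last exact: ltW.
by rewrite /C -!mulrA.
Unshelve. all: by end_near. Qed.

Lemma D2_cvg (al t : R) : t != 0 -> 0 < al < 2 ->
  (fun h => (`|t + h| `^ al + `|t - h| `^ al - 2 * `|t| `^ al) / h `^ al) @ 0^'+ --> 0.
Proof.
move=> tn0 alr.
case: (ltgtP t 0) => [tn|tp|t0]; last by rewrite t0 eqxx in tn0.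
- have E : (fun h => (`|t + h| `^ al + `|t - h| `^ al - 2 * `|t| `^ al) / h `^ al)
     = (fun h => (`|-t + h| `^ al + `|-t - h| `^ al - 2 * `|-t| `^ al) / h `^ al).
    apply: funext => h.
    rewrite normrN -(normrN (-t + h)) -(normrN (-t - h)) !opprD !opprK.
    by rewrite (addrC (_ `^ al) (_ `^ al)).
  by rewrite E; apply: D2_cvg_pos => //; rewrite oppr_gt0.
- exact: D2_cvg_pos.
Qed.

Definition w3 (e : 'I_3) : R := (val e)%:R - 1.
Definition c3 (e : 'I_3) : R := if val e == 1%N then -2 else 1.
Definition Kf (al c y : R) : R := 2^-1 * (`|c| `^ al + `|y| `^ al - `|c - y| `^ al).
Definition D2 (al t h : R) := `|t + h| `^ al + `|t - h| `^ al - 2 * `|t| `^ al.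

Lemma d_eq (al c x h : R) : \sum_(e < 3) c3 e * Kf al c (x + w3 e * h)
   = 2^-1 * (D2 al x h - D2 al (c - x) h).
Proof.
rewrite !big_ord_recr big_ord0 /= /c3 /w3 /Kf /D2 /=.
have -> : x + (0%:R - 1) * h = x - h by rewrite sub0r mulN1r.
have -> : x + (1%:R - 1) * h = x by rewrite subrr mul0r addr0.
have -> : x + (2%:R - 1) * h = x + h by rewrite -addn1 natrD addrK mul1r.
have -> : c - (x - h) = c - x + h by ring.
have -> : c - (x + h) = c - x - h by ring.
ring.
Qed.

Lemma e_cvg (al c x : R) : 0 < al < 2 -> x != 0 ->
  (fun h => (\sum_(e < 3) c3 e * Kf al c (x + w3 e * h)) / h `^ al) @ 0^'+
    --> (if c == x then -1 else 0 : R).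
Proof.
move=> alr x0.
have al0 : al != 0 by case/andP: alr => a0 _; rewrite gt_eqF.
under eq_cvg do rewrite d_eq mulrBr mulrBl -mulrA.
have cx : (fun h => 2^-1 * (D2 al x h / h `^ al)) @ 0^'+ --> 0.
  suff : (fun h => 2^-1 * (D2 al x h / h `^ al)) @ 0^'+ --> (2^-1 * 0 : R) by rewrite mulr0.
  by apply: cvgMl_tmp; exact: D2_cvg.
case: eqP => [->|/eqP ncx].
- rewrite subrr.
  suff : (fun h => 2^-1 * (D2 al x h / h `^ al) - 2^-1 * D2 al 0 h / h `^ al) @ 0^'+ --> (0 - 1 : R).
    by rewrite sub0r.
  apply: cvgB => //.
  apply: (cvg_trans _ (@cvg_cst _ (1 : R) _ (0:R)^'+ _)).
  apply: near_eq_cvg; near=> h; apply/esym.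
  have h0 : 0 < h by near: h; exact: nbhs_right_gt.
  rewrite /D2 !add0r normrN normr0 powR0 // mulr0 subr0 gtr0_norm //.
  have p0 : h `^ al != 0 by rewrite gt_eqF ?powR_gt0.
  by field.
- suff : (fun h => 2^-1 * (D2 al x h / h `^ al) - 2^-1 * D2 al (c - x) h / h `^ al) @ 0^'+ --> (0 - 2^-1 * 0 : R).
    by rewrite mulr0 subr0.
  apply: cvgB => //.
  under eq_cvg do rewrite -mulrA.
  apply: cvgMl_tmp; apply: D2_cvg => //; by rewrite subr_eq0.
Unshelve. all: by end_near. Qed.


Lemma indep (N m : nat) (al : 'I_N -> R) (hal : forall i, 0 < al i < 2)
  (X : 'I_m -> 'rV[R]_N) (hX : injective X) (hpos : forall k i, 0 < X k ord0 i)
  (a : 'I_m -> R)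
  (hf : forall y : 'rV[R]_N, (forall i, 0 <= y ord0 i) ->
     \sum_(k < m) a k * \prod_(i < N) Kf (al i) (X k ord0 i) (y ord0 i) = 0) :
  forall j, a j = 0.
Proof.
move=> j.
set x := X j.
pose d k i h := \sum_(e < 3) c3 e * Kf (al i) (X k ord0 i) (x ord0 i + w3 e * h).
pose S h := \sum_(k < m) a k * \prod_(i < N) (d k i h / h `^ al i).
have w3ge e : -1 <= w3 e.
  have : 0 <= (val e)%:R :> R := ler0n _ _.
  rewrite /w3; lra.
have S0 : \forall h \near 0^'+, S h = 0.
  near=> h.
  have h0 : 0 < h by near: h; exact: nbhs_right_gt.
  have hx : forall i, h <= x ord0 i.
    near: h; apply: filter_forall => i.
    exists (x ord0 i) => /=; first exact: hpos.
    by move=> y /= + y0; rewrite distrC subr0 gtr0_norm// => /ltW.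
  have A : \sum_(k < m) a k * \prod_(i < N) d k i h = 0.
    have E k : a k * \prod_(i < N) d k i h
       = \sum_(f : {ffun 'I_N -> 'I_3}) (\prod_(i < N) c3 (f i)) *
           (a k * \prod_(i < N) Kf (al i) (X k ord0 i) (x ord0 i + w3 (f i) * h)).
      rewrite /d bigA_distr_bigA mulr_sumr; apply: eq_bigr => f _.
      rewrite big_split /=; ring.
    rewrite (eq_bigr _ (fun k _ => E k)) exchange_big /=.
    apply: big1 => f _; rewrite -mulr_sumr.
    have Hy : forall i, 0 <= (\row_i (x ord0 i + w3 (f i) * h) : 'rV[R]_N) ord0 i.
      move=> i; rewrite mxE.
      have := w3ge (f i); have := hx i; nra.
    suff -> : \sum_(k < m) a k * \prod_(i < N) Kf (al i) (X k ord0 i) (x ord0 i + w3 (f i) * h) = 0.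
      by rewrite mulr0.
    apply: etrans (hf _ Hy).
    apply: eq_bigr => k _; congr (_ * _).
    by apply: eq_bigr => i _; rewrite mxE.
  rewrite /S.
  have -> : \sum_(k < m) a k * \prod_(i < N) (d k i h / h `^ al i)
     = (\sum_(k < m) a k * \prod_(i < N) d k i h) / \prod_(i < N) h `^ al i.
    rewrite mulr_suml; apply: eq_bigr => k _.
    by rewrite big_split /= prodfV mulrA.
  by rewrite A mul0r.
have Scvg : S @ 0^'+ --> \sum_(k < m) a k * \prod_(i < N) (if X k ord0 i == x ord0 i then -1 else 0 : R).
  apply: cvg_big; first exact: add_continuous.
  move=> k _; apply: cvgMl_tmp.
  apply: cvg_big; first exact: mul_continuous.
  move=> i _; apply: e_cvg => //.
  by rewrite gt_eqF //; exact: hpos.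
have S0' : S @ 0^'+ --> 0.
  apply: (cvg_trans _ (@cvg_cst _ (0 : R) _ (0:R)^'+ _)).
  apply: near_eq_cvg; near=> h; apply/esym; near: h; exact: S0.
have L := @cvg_unique _ (@norm_hausdorff _ R^o) _ (fmap_proper_filter S (at_right_proper_filter 0)) _ _ Scvg S0'.
move: L; rewrite (bigD1 j) //= [X in _ + X]big1 ?addr0.
- under eq_bigr do rewrite eqxx.
  rewrite prodr_const card_ord => /eqP.
  by rewrite mulf_eq0 expf_eq0 oppr_eq0 oner_eq0 andbF orbF => /eqP.
- move=> k kj.
  have [i ne] : exists i, X k ord0 i != x ord0 i.
    apply/existsP; apply: contraR kj; rewrite negb_exists => /forallP H.
    apply/eqP; apply: hX; apply/matrixP => r i; rewrite (ord1 r).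
    by have := H i; rewrite negbK => /eqP.
  by rewrite (bigD1 i) //= (negbTE ne) mul0r mulr0.
Unshelve. all: by end_near. Qed.

End An.

Lemma cov_zero (R : realType) (dm : measure_display) (T : measurableType dm)
  (P : probability T R) (N : nat) (V : 'rV[R]_N -> T -> R) (C : 'rV[R]_N -> 'rV[R]_N -> R)
  (O : set 'rV[R]_N)
  (mV : forall x, O x -> measurable_fun setT (V x))
  (hC : forall x y, O x -> O y -> ('E_P[fun w => (V x w * V y w)%R] = (C x y)%:E)%E)
  (m : nat) (X : 'I_m -> 'rV[R]_N) (hXO : forall k, O (X k)) (a : 'I_m -> R)
  (hae : {ae P, forall w, \sum_(k < m) a k * V (X k) w = 0}) :
  forall y, O y -> \sum_(k < m) a k * C (X k) y = 0.
Proof.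
move=> y Oy.
have mP x z : O x -> O z -> measurable_fun setT (fun w => V x w * V z w).
  by move=> Ox Oz; apply: measurable_funM; apply: mV.
have intp x z : O x -> O z -> P.-integrable setT (EFin \o (fun w => V x w * V z w)).
  move=> Ox Oz; apply/integrableP; split; first exact/measurable_EFinP/mP.
  rewrite /= integral_fin_num_abs //; last exact: mP.
  by have := hC x z Ox Oz; rewrite unlock => ->.
have mZ : measurable_fun setT (fun w => \sum_(k < m) a k * V (X k) w).
  apply: measurable_sum => k; apply: measurable_funM => //; exact: mV.
have E1 : (\int[P]_w ((\sum_(k < m) a k * V (X k) w) * V y w)%:E = 0)%E.
  rewrite (@ae_eq_integral _ _ _ P setT (cst 0%E)) //.
  - by rewrite integral0.
  - apply/measurable_EFinP; apply: measurable_funM => //; exact: mV.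
  - apply: filterS hae => w /= Zw _; by rewrite Zw mul0r.
have E2 : (\int[P]_w ((\sum_(k < m) a k * V (X k) w) * V y w)%:E
    = \sum_(k < m) (a k)%:E * (C (X k) y)%:E)%E.
  under eq_integral => w _ do rewrite mulr_suml -sumEFin.
  rewrite integral_sum //; last first.
    move=> k; under eq_fun do rewrite -mulrA EFinM.
    apply: integrableZl => //; exact: intp.
  apply: eq_bigr => k _.
  under eq_integral => w _ do rewrite -mulrA EFinM.
  rewrite integralZl //; last exact: intp.
  by have := hC (X k) y (hXO k) Oy; rewrite unlock => ->.
have E3 : (\sum_(k < m) (a k)%:E * (C (X k) y)%:E = (\sum_(k < m) a k * C (X k) y)%:E)%E.
  by rewrite -sumEFin; apply: eq_bigr => k _; rewrite EFinM.
by move: E1; rewrite E2 E3 => -[].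
Qed.

Theorem lemma5p3 (R : realType) (dm : measure_display) (T : measurableType dm)
    (P : probability T R) (N dd : nat) (hN : (0 < N)%N) (hd : (0 < dd)%N)
    (H : 'I_N -> R) (hH : forall i, 0 < H i < 1)
    (v : 'rV[R]_N -> 'I_dd -> T -> R) (hv : is_fbs P H v)
    (m : nat) (X : 'I_m -> 'rV[R]_N) (hXinj : injective X)
    (hXpos : forall k i, 0 < X k ord0 i) :
  (* v_1(x^1), ..., v_1(x^m) are linearly independent random variables *)
  forall a : 'I_m -> R,
    {ae P, forall w, \sum_(k < m) a k * v (X k) (Ordinal hd) w = 0} ->
    forall k, a k = 0.
Proof.
move=> a hae.
case: hv => _ hG hcov.
pose j0 := Ordinal hd.
pose V x := v x j0.
have mV : forall x, orthant x -> measurable_fun setT (V x).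
  move=> x Ox.
  have [s [_ ms _]] := hG 1%N (fun _ => x) (fun _ => j0) (fun _ => 1) (fun _ => Ox).
  have -> : V x = (fun w => \sum_(k < 1) 1 * v x j0 w).
    by apply/funext => w; rewrite big_ord1 mul1r.
  exact: ms.
have hC : forall x y, orthant x -> orthant y ->
    ('E_P[fun w => (V x w * V y w)%R] = (fbs_cov H x y)%:E)%E.
  by move=> x y Ox Oy; rewrite hcov // eqxx mul1r.
have hXO : forall k, orthant (X k).
  by move=> k i; apply: ltW.
have hf := @cov_zero R dm T P N V (fbs_cov H) (@orthant R N) mV hC m X hXO a hae.
apply: (@indep R N m (fun i => 2 * H i)) => //.
  move=> i; have := hH i; case/andP => h0 h1; apply/andP; split; lra.
exact: hXinj.
Qed.
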